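(* Let $\Omega\subseteq\mathbb{R}^2$ be open and connected. Let $R\in C^2(\Omega;SO(2))$ and $\alpha\in\mathbb{R}^2$ be such that $\operatorname{curl} R=\alpha$ in $\Omega$. Then $R$ is constant.
   Context: $SO(2)$ is the group of $2\times2$ rotation matrices. For a vector field $f=(f_1,f_2)$ on a subset of $\mathbb{R}^2$, $\operatorname{curl} f=\partial_1 f_2-\partial_2 f_1$; for a matrix field $R$, $\operatorname{curl}R\in\mathbb{R}^2$ is obtained by applying $\operatorname{curl}$ to each row, i.e. $(\operatorname{curl}R)_i=\partial_1R_{i2}-\partial_2R_{i1}$. *)

(* Defs.v *)
From HB Require Import structures.
From mathcomp Require Import all_boot all_order all_algebra.
From mathcomp Require Import all_classical all_reals all_analysis.
Set Implicit Arguments. Unset Strict Implicit. Unset Printing Implicit Defensive.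
Import Order.TTheory GRing.Theory Num.Theory.
Import numFieldNormedType.Exports.
Local Open Scope classical_set_scope.
Local Open Scope ring_scope.

(* Points of R^2 are row vectors 'rV[R]_2; coordinates x 0 0 and x 0 1. *)

(* i-th standard basis vector of R^2 (0-indexed: i = 0 is x_1, i = 1 is x_2). *)
Definition ebase {R : realType} (i : 'I_2) : 'rV[R]_2 := delta_mx 0 i.

Definition partial {R : realType} (i : 'I_2) (f : 'rV[R]_2 -> R) : 'rV[R]_2 -> R :=
  fun x => 'D_(ebase i) f x.

Definition C2_on {R : realType} (O : set 'rV[R]_2) (f : 'rV[R]_2 -> R) : Prop :=
  (forall x, O x -> differentiable f x) /\
  (forall i x, O x -> differentiable (partial i f) x) /\
  (forall i j x, O x -> {for x, continuous (partial j (partial i f))}).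

Definition SO2 {R : realType} (M : 'M[R]_2) : Prop :=
  M^T *m M = 1%:M /\ \det M = 1.

(* row-wise curl of a matrix field: (curl Rf)_i = d_1 Rf_{i2} - d_2 Rf_{i1}
   (0-indexed: partial 0 of entry (i,1) minus partial 1 of entry (i,0)). *)
Definition curl_mx {R : realType} (Rf : 'rV[R]_2 -> 'M[R]_2) (i : 'I_2)
  (x : 'rV[R]_2) : R :=
  partial 0 (fun y => Rf y i 1) x - partial 1 (fun y => Rf y i 0) x.

(* Main.v *)
Require Import Defs.
From HB Require Import structures.
From mathcomp Require Import all_boot all_order all_algebra.
From mathcomp Require Import all_classical all_reals all_analysis.
From mathcomp Require Import ring lra.
Import Order.TTheory GRing.Theory Num.Theory.
Import numFieldNormedType.Exports.
Local Open Scope classical_set_scope.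
Local Open Scope ring_scope.


Lemma line_is_derive (R : realType) (f : 'rV[R]_2 -> R) (y v : 'rV[R]_2) (s : R) :
  differentiable f (y + s *: v) ->
  is_derive s 1 (fun t => f (y + t *: v)) ('D_v f (y + s *: v)).
Proof.
move=> df.
have E : (fun h : R => h^-1 *: (((fun t => f (y + t *: v)) \o shift s) (h *: 1)
            - f (y + s *: v))) =
         (fun h : R => h^-1 *: ((f \o shift (y + s *: v)) (h *: v) - f (y + s *: v))).
  apply/funext => h /=; congr (_ *: (f _ - _)).
  rewrite -[h *: 1]/(h * 1) mulr1 scalerDl addrCA addrA.
  congr (_ + _); exact: addrC.
constructor.
  by rewrite /derivable E; exact: diff_derivable.
by rewrite /derive E.
Qed.

Lemma line_MVT (R : realType) (f : 'rV[R]_2 -> R) (y v : 'rV[R]_2) (a b : R) :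
  a <= b -> (forall t, a <= t <= b -> differentiable f (y + t *: v)) ->
  exists2 c, a <= c <= b &
    f (y + b *: v) - f (y + a *: v) = 'D_v f (y + c *: v) * (b - a).
Proof.
move=> ab df.
have := @MVT_segment R (fun t => f (y + t *: v)) (fun t => 'D_v f (y + t *: v)) a b ab.
case.
- move=> t; rewrite in_itv /= => /andP[ha hb]; apply: line_is_derive.
  by apply: df; rewrite !ltW.
- apply: continuous_in_subspaceT => t; rewrite inE /= in_itv /= => tab.
  have [dd _] := @line_is_derive R f y v t (df t tab).
  exact/differentiable_continuous/derivable1_diffP.
- move=> c; rewrite in_itv /= => cab E; by exists c.
Qed.

Lemma mvt1 (R : realType) (phi dphi : R -> R) (a b : R) :
  a <= b -> (forall t, a <= t <= b -> is_derive t 1 phi (dphi t)) ->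
  exists2 c, a <= c <= b & phi b - phi a = dphi c * (b - a).
Proof.
move=> ab df.
have := @MVT_segment R phi dphi a b ab.
case.
- move=> t; rewrite in_itv /= => /andP[ha hb]; apply: df.
  by rewrite !ltW.
- apply: continuous_in_subspaceT => t; rewrite inE /= in_itv /= => tab.
  have [dd _] := df t tab.
  exact/differentiable_continuous/derivable1_diffP.
- move=> c; rewrite in_itv /= => cab E; by exists c.
Qed.

Lemma rect (R : realType) (f : 'rV[R]_2 -> R) (y v w : 'rV[R]_2) (h k : R) :
  0 <= h -> 0 <= k ->
  (forall s u, 0 <= s <= h -> 0 <= u <= k ->
     differentiable f (y + s *: v + u *: w) /\
     differentiable ('D_v f) (y + s *: v + u *: w)) ->
  exists s, exists u, [/\ 0 <= s <= h, 0 <= u <= k &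
    f (y + h *: v + k *: w) - f (y + h *: v) - f (y + k *: w) + f y =
    'D_w ('D_v f) (y + s *: v + u *: w) * (h * k)].
Proof.
move=> h0 k0 D.
have k0k : 0 <= k <= k.
  apply/andP. split. exact: k0. exact: lexx.
have z0k : (0:R) <= 0 <= k.
  apply/andP. split. exact: lexx. exact: k0.
have [s sh E1] : exists2 s, 0 <= s <= h &
    (fun t => f (y + k *: w + t *: v) - f (y + t *: v)) h
    - (fun t => f (y + k *: w + t *: v) - f (y + t *: v)) 0 =
    ('D_v f (y + k *: w + s *: v) - 'D_v f (y + s *: v)) * (h - 0).
  apply: (@mvt1 R (fun t => f (y + k *: w + t *: v) - f (y + t *: v))
     (fun t => 'D_v f (y + k *: w + t *: v) - 'D_v f (y + t *: v))) => // t th.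
  have d1 : differentiable f (y + k *: w + t *: v).
    by have [] := D t k th k0k; rewrite addrAC.
  have d2 : differentiable f (y + t *: v).
    by have [] := D t 0 th z0k; rewrite scale0r addr0.
  have i1 := @line_is_derive R f (y + k *: w) v t d1.
  have i2 := @line_is_derive R f y v t d2.
  have := is_deriveB i1 i2.
  done.
have [u uk E2] := @line_MVT R ('D_v f) (y + s *: v) w 0 k k0
  (fun u uk => (D s u sh uk).2).
exists s, u; split => //.
rewrite !scale0r !addr0 !subr0 in E1 E2.
rewrite [y + k *: w + h *: v]addrAC [y + k *: w + s *: v]addrAC in E1.
have -> : f (y + h *: v + k *: w) - f (y + h *: v) - f (y + k *: w) + f y =
  f (y + h *: v + k *: w) - f (y + h *: v) - (f (y + k *: w) - f y) by ring.
rewrite E1 E2; ring.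
Qed.
Lemma sq_ball (R : realType) (x : 'rV[R]_2) (s u d : R) :
  0 <= s < d -> 0 <= u < d -> ball x d (x + s *: ebase 0 + u *: ebase 1).
Proof.
move=> /andP[s0 sd] /andP[u0 ud].
rewrite -ball_normE /ball_ /=.
have -> : x - (x + s *: ebase 0 + u *: ebase 1) = - (s *: ebase 0 + u *: ebase 1).
  by rewrite -addrA opprD addrA subrr add0r.
rewrite normrN.
apply: (@le_lt_trans _ _ (Num.max s u)); last by rewrite gt_max sd ud.
rewrite [X in X <= _]mx_normrE.
apply: bigmax_le; first by rewrite le_max s0.
case=> i j _ /=; rewrite !mxE /=.
rewrite (ord1 i); case: j => -[|[|//]] jl /=; rewrite mulr1 mulr0 ?addr0 ?add0r ger0_norm // le_max lexx ?orbT //.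
Qed.

Lemma aux4 (R : realType) (a b c d : R) : c = d -> a - b = (a - c) - (b - d).
Proof. by move=> ->; ring. Qed.

Lemma schwarz (R : realType) (f : 'rV[R]_2 -> R) (x : 'rV[R]_2) (r : R) :
  0 < r ->
  (forall z, ball x r z -> [/\ differentiable f z,
     differentiable (partial 0 f) z & differentiable (partial 1 f) z]) ->
  {for x, continuous (partial 1 (partial 0 f))} ->
  {for x, continuous (partial 0 (partial 1 f))} ->
  partial 1 (partial 0 f) x = partial 0 (partial 1 f) x.
Proof.
move=> r0 D.
pose g1 := partial 1 (partial 0 f); pose g2 := partial 0 (partial 1 f).
change ({for x, continuous g1} -> {for x, continuous g2} -> g1 x = g2 x).
move=> c1 c2.
have [//|ne] := eqVneq (g1 x) (g2 x); exfalso.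
pose e := `|g1 x - g2 x| / 2.
have e0 : 0 < e by rewrite divr_gt0 // normr_gt0 subr_eq0.
have := @cvgr_dist_lt _ _ _ _ (nbhs_filter x) g1 (g1 x) c1 e e0; move=> /nbhs_ballP [d1 d10 H1].
have := @cvgr_dist_lt _ _ _ _ (nbhs_filter x) g2 (g2 x) c2 e e0; move=> /nbhs_ballP [d2 d20 H2].
pose h := Num.min r (Num.min d1 d2) / 2.
have m0 : 0 < Num.min r (Num.min d1 d2) by rewrite !lt_min r0 d10 d20.
have h0 : 0 < h by rewrite divr_gt0.
have hm : h < Num.min r (Num.min d1 d2).
  by rewrite /h ltr_pdivrMr // ltr_pMr // ltr1n.
move: hm; rewrite !lt_min => /and3P[hr hd1 hd2].
have inb (d s u : R) : h < d -> 0 <= s <= h -> 0 <= u <= h ->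
    ball x d (x + s *: ebase 0 + u *: ebase 1).
  move=> hd /andP[s0 sh] /andP[u0 uh]; apply: sq_ball.
    by rewrite s0 (le_lt_trans sh hd).
  by rewrite u0 (le_lt_trans uh hd).
have h0' : 0 <= h by exact: ltW.
have [s1 [u1 [s1h u1h E1]]] : exists s, exists u, [/\ 0 <= s <= h, 0 <= u <= h &
    f (x + h *: ebase 0 + h *: ebase 1) - f (x + h *: ebase 0) - f (x + h *: ebase 1) + f x =
    'D_(ebase 1) ('D_(ebase 0) f) (x + s *: ebase 0 + u *: ebase 1) * (h * h)].
  apply: rect => // s u sh uh.
  by have [a b _] := D _ (inb r s u hr sh uh).
have [s2 [u2 [s2h u2h E2]]] : exists s, exists u, [/\ 0 <= s <= h, 0 <= u <= h &
    f (x + h *: ebase 1 + h *: ebase 0) - f (x + h *: ebase 1) - f (x + h *: ebase 0) + f x =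
    'D_(ebase 0) ('D_(ebase 1) f) (x + s *: ebase 1 + u *: ebase 0) * (h * h)].
  apply: rect => // s u sh uh.
  by have [a _ b] := D _ (inb r u s hr uh sh); rewrite addrAC.
rewrite [x + h *: ebase 1 + h *: ebase 0]addrAC [x + s2 *: ebase 1 + u2 *: ebase 0]addrAC in E2.
have Eg : 'D_(ebase 1) ('D_(ebase 0) f) (x + s1 *: ebase 0 + u1 *: ebase 1) =
          'D_(ebase 0) ('D_(ebase 1) f) (x + u2 *: ebase 0 + s2 *: ebase 1).
  have hh : h * h != 0 by rewrite mulf_neq0 // gt_eqF.
  apply: (mulIf hh). apply: (eq_trans (esym E1)). apply: (eq_trans _ E2). ring.
have L1 : `|g1 x - g1 (x + s1 *: ebase 0 + u1 *: ebase 1)| < e.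
  apply: H1. exact: inb.
have L2 : `|g2 x - g2 (x + u2 *: ebase 0 + s2 *: ebase 1)| < e.
  apply: H2. exact: inb.
have : `|g1 x - g2 x| < e + e.
  have -> : g1 x - g2 x = (g1 x - g1 (x + s1 *: ebase 0 + u1 *: ebase 1))
     - (g2 x - g2 (x + u2 *: ebase 0 + s2 *: ebase 1)).
    apply: aux4; exact: Eg.
  apply: (le_lt_trans (ler_normB _ _)). exact: ltrD L1 L2.
have ee : e + e = `|g1 x - g2 x| by rewrite /e -splitr.
by rewrite ee ltxx.
Qed.



Lemma rv2_decomp (R : realType) (v : 'rV[R]_2) :
  v = v 0 0 *: ebase 0 + v 0 1 *: ebase 1.
Proof.
apply/rowP => j; rewrite !mxE /=.
case: j => -[|[|//]] jl /=; rewrite ?mulr1 ?mulr0 ?addr0 ?add0r //;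
  congr (v 0 _); exact: val_inj.
Qed.

Lemma zero_diff (R : realType) (f : 'rV[R]_2 -> R) (p v : 'rV[R]_2) :
  differentiable f p -> partial 0 f p = 0 -> partial 1 f p = 0 ->
  'D_v f p = 0.
Proof.
move=> df; rewrite /partial !deriveE // => H0 H1.
by rewrite (rv2_decomp _ v) linearD !linearZ /= H0 H1 !scaler0 addr0.
Qed.

Lemma loc_const (R : realType) (f : 'rV[R]_2 -> R) (O : set 'rV[R]_2) (z : 'rV[R]_2) :
  open O -> O z ->
  (forall p, O p -> [/\ differentiable f p, partial 0 f p = 0 & partial 1 f p = 0]) ->
  exists2 r : R, 0 < r & forall w, ball z r w -> O w /\ f w = f z.
Proof.
move=> oO Oz D.
have : nbhs z O by move: oO; rewrite openE => /(_ z Oz).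
case/nbhs_ballP => r r0 Hr; exists r => // w zw; split; first exact: Hr.
have inb t : 0 <= t <= 1 -> O (z + t *: (w - z)).
  move=> /andP[t0 t1]; apply: Hr.
  rewrite -ball_normE /ball_ /= opprD addrA subrr sub0r normrN normrZ.
  move: zw; rewrite -ball_normE /ball_ /= => zw.
  rewrite -normrN opprB in zw.
  rewrite ger0_norm //; apply: (le_lt_trans _ zw).
  by rewrite ler_piMl.
have [c c01 E] := @line_MVT R f z (w - z) 0 1 ler01
  (fun t ht => let: And3 d _ _ := D _ (inb t ht) in d).
have [d p0 p1] := D _ (inb c c01).
move: E; rewrite zero_diff // mul0r scale1r scale0r addr0 addrC.
rewrite addrC subrKC => /eqP; rewrite subr_eq0 => /eqP.
done.
Qed.

Lemma const_connected (R : realType) (f : 'rV[R]_2 -> R) (O : set 'rV[R]_2) :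
  open O -> connected O ->
  (forall p, O p -> [/\ differentiable f p, partial 0 f p = 0 & partial 1 f p = 0]) ->
  forall y z, O y -> O z -> f z = f y.
Proof.
move=> oO cO D y z Oy Oz.
pose B := [set w | O w /\ f w = f y].
pose C := [set w | O w /\ f w <> f y].
have oB : open B.
  rewrite openE => w [Ow fw]; apply/nbhs_ballP.
  have [r r0 Hr] := @loc_const _ f O w oO Ow D.
  exists r => // u /Hr [Ou fu]; split => //; by rewrite fu.
have oC : open C.
  rewrite openE => w [Ow fw]; apply/nbhs_ballP.
  have [r r0 Hr] := @loc_const _ f O w oO Ow D.
  exists r => // u /Hr [Ou fu]; split => //; by rewrite fu.
have BO : B = O.
  apply: cO.
  - by exists y.
  - exists B => //; apply/seteqP; split => w; first by move=> [Ow fw].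
    by case.
  - exists (~` C); first exact: open_closedC.
    apply/seteqP; split => w.
      by move=> [Ow fw]; split => // -[_].
    move=> [Ow nC]; split => //; apply: contrapT => ne; exact: nC.
have : B z by rewrite BO.
by case.
Qed.



Lemma alg1 (R : realType) (a b a0 a1 b0 b1 p q : R) :
  a ^+ 2 + b ^+ 2 = 1 -> a * a0 + b * b0 = 0 -> a * a1 + b * b1 = 0 ->
  - b0 - a1 = p -> a0 - b1 = q ->
  [/\ a0 = p * (a * b) + q * (b * b), b0 = - p * (a * a) + - q * (a * b),
      a1 = - p * (b * b) + q * (a * b) & b1 = p * (a * b) + - q * (a * a)].
Proof.
move=> N c0 c1 <- <-; split; apply/eqP; rewrite -subr_eq0.
- have -> : a0 - ((- b0 - a1) * (a * b) + (a0 - b1) * (b * b)) =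
    a0 * (1 - (a ^+ 2 + b ^+ 2)) + a * (a * a0 + b * b0) + b * (a * a1 + b * b1) by ring.
  by rewrite N c0 c1; apply/eqP; ring.
- have -> : b0 - (- (- b0 - a1) * (a * a) + - (a0 - b1) * (a * b)) =
    b0 * (1 - (a ^+ 2 + b ^+ 2)) + b * (a * a0 + b * b0) - a * (a * a1 + b * b1) by ring.
  by rewrite N c0 c1; apply/eqP; ring.
- have -> : a1 - (- (- b0 - a1) * (b * b) + (a0 - b1) * (a * b)) =
    a1 * (1 - (a ^+ 2 + b ^+ 2)) + a * (a * a1 + b * b1) - b * (a * a0 + b * b0) by ring.
  by rewrite N c0 c1; apply/eqP; ring.
- have -> : b1 - ((- b0 - a1) * (a * b) + - (a0 - b1) * (a * a)) =
    b1 * (1 - (a ^+ 2 + b ^+ 2)) + a * (a * a0 + b * b0) + b * (a * a1 + b * b1) by ring.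
  by rewrite N c0 c1; apply/eqP; ring.
Qed.

Lemma alg2 (R : realType) (a b a0 a1 b0 b1 p q : R) :
  a ^+ 2 + b ^+ 2 = 1 ->
  a0 = p * (a * b) + q * (b * b) -> b0 = - p * (a * a) + - q * (a * b) ->
  a1 = - p * (b * b) + q * (a * b) -> b1 = p * (a * b) + - q * (a * a) ->
  p * (a * b1 + b * a1) + q * (b * b1 + b * b1) =
    - p * (b * b0 + b * b0) + q * (a * b0 + b * a0) ->
  - p * (a * a1 + a * a1) + - q * (a * b1 + b * a1) =
    p * (a * b0 + b * a0) + - q * (a * a0 + a * a0) ->
  p = 0 /\ q = 0.
Proof.
move=> N -> -> -> -> S1 S2.
have H1 : b * (p ^+ 2 + q ^+ 2) = 0.
  apply/eqP; rewrite -oppr_eq0 -[- _]mulr1 -N; apply/eqP.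
  move/eqP: S1; rewrite -subr_eq0 => /eqP <-; ring.
have H2 : a * (p ^+ 2 + q ^+ 2) = 0.
  apply/eqP; rewrite -[_ * _]mulr1 -N; apply/eqP.
  move/eqP: S2; rewrite -subr_eq0 => /eqP <-; ring.
have S : p ^+ 2 + q ^+ 2 = 0.
  rewrite -[_ + _]mul1r -N.
  have -> : (a ^+ 2 + b ^+ 2) * (p ^+ 2 + q ^+ 2) =
    a * (a * (p ^+ 2 + q ^+ 2)) + b * (b * (p ^+ 2 + q ^+ 2)) by ring.
  by rewrite H1 H2 !mulr0 addr0.
move/eqP: S; rewrite paddr_eq0 ?sqr_ge0 // !sqrf_eq0 => /andP[/eqP -> /eqP ->].
by [].
Qed.


Lemma det2 (R : realType) (M : 'M[R]_2) : \det M = M 0 0 * M 1 1 - M 0 1 * M 1 0.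
Proof.
rewrite (expand_det_row _ 0) !big_ord_recl big_ord0 /cofactor !det_mx11 !mxE /=.
have -> : lift (0 : 'I_2) (0 : 'I_1) = 1 by apply/val_inj.
have -> : lift (1 : 'I_2) (0 : 'I_1) = 0 by apply/val_inj.
rewrite /bump /=.
rewrite expr0 expr1 /=; ring.
Qed.

Lemma so2_form (R : realType) (M : 'M[R]_2) : SO2 M ->
  [/\ M 1 1 = M 0 0, M 0 1 = - M 1 0 & M 0 0 ^+ 2 + M 1 0 ^+ 2 = 1].
Proof.
case=> T D; rewrite det2 in D.
have e i j : (M^T *m M) i j = (1%:M : 'M[R]_2) i j by rewrite T.
have e00 := e 0 0; have e11 := e 1 1; have e01 := e 0 1.
rewrite !mxE !big_ord_recl !big_ord0 !mxE /= in e00 e11 e01.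
have l1 : lift (ord0 : 'I_2) (ord0 : 'I_1) = 1 by apply/val_inj.
rewrite l1 !addr0 in e00 e11 e01.
have S : (M 1 1 - M 0 0) ^+ 2 + (M 0 1 + M 1 0) ^+ 2 = 0.
  have -> : (M 1 1 - M 0 0) ^+ 2 + (M 0 1 + M 1 0) ^+ 2 =
    (M 0 0 * M 0 0 + M 1 0 * M 1 0) + (M 0 1 * M 0 1 + M 1 1 * M 1 1)
    - 2 * (M 0 0 * M 1 1 - M 0 1 * M 1 0) by ring.
  by rewrite e00 e11 D; ring.
move/eqP: S; rewrite paddr_eq0 ?sqr_ge0 // !sqrf_eq0 subr_eq0 addr_eq0.
move=> /andP[/eqP -> /eqP ->]; split => //.
Qed.



Lemma dN (R : realType) (u : 'rV[R]_2 -> R) (x v : 'rV[R]_2) :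
  differentiable u x -> 'D_v (fun y => - u y) x = - 'D_v u x.
Proof. by move=> du; apply: deriveN; exact: diff_derivable. Qed.

Lemma d_comb (R : realType) (u1 w1 u2 w2 : 'rV[R]_2 -> R) (c1 c2 : R) (x v : 'rV[R]_2) :
  differentiable u1 x -> differentiable w1 x ->
  differentiable u2 x -> differentiable w2 x ->
  'D_v ((c1 \*: (u1 * w1)) + (c2 \*: (u2 * w2))) x =
  c1 * (u1 x * 'D_v w1 x + w1 x * 'D_v u1 x) +
  c2 * (u2 x * 'D_v w2 x + w2 x * 'D_v u2 x).
Proof.
move=> Du1 Dw1 Du2 Dw2.
have du1 : derivable u1 x v by exact: diff_derivable.
have dw1 : derivable w1 x v by exact: diff_derivable.
have du2 : derivable u2 x v by exact: diff_derivable.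
have dw2 : derivable w2 x v by exact: diff_derivable.
have m1 := derivableM du1 dw1; have m2 := derivableM du2 dw2.
have l1 := @derivableZ _ _ _ _ c1 _ _ m1; have l2 := @derivableZ _ _ _ _ c2 _ _ m2.
rewrite (deriveD l1 l2) (deriveZ _ m1) (deriveZ _ m2) (deriveM du1 dw1) (deriveM du2 dw2).
by [].
Qed.

Lemma comb_eval (R : realType) (u1 w1 u2 w2 : 'rV[R]_2 -> R) (c1 c2 : R) (y : 'rV[R]_2) :
  ((c1 \*: (u1 * w1)) + (c2 \*: (u2 * w2))) y = c1 * (u1 y * w1 y) + c2 * (u2 y * w2 y).
Proof. by []. Qed.

Lemma alg0 (R : realType) (a b x y : R) :
  1 * (a * x + a * x) + 1 * (b * y + b * y) = 0 -> a * x + b * y = 0.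
Proof.
move=> E; have : 2 * (a * x + b * y) = 0 by rewrite -E; ring.
by move/eqP; rewrite mulf_eq0 pnatr_eq0 /= => /eqP.
Qed.

Lemma I2cases (i : 'I_2) : i = 0 \/ i = 1.
Proof.
case: i => -[|[|//]] H.
  by left; apply: val_inj.
by right; apply: val_inj.
Qed.

Theorem theorem3p1 (R : realType) (Omega : set 'rV[R]_2)
  (Rf : 'rV[R]_2 -> 'M[R]_2) (alpha : 'I_2 -> R) :
  open Omega -> connected Omega ->
  (forall i j, C2_on Omega (fun x => Rf x i j)) ->
  (forall x, Omega x -> SO2 (Rf x)) ->
  (forall i x, Omega x -> curl_mx Rf i x = alpha i) ->
  exists R0 : 'M[R]_2, forall x, Omega x -> Rf x = R0.
Proof.
move=> oO cO C2 SO curl.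
case: (pselect (exists x0, Omega x0)) => [[x0 Ox0]|nO]; last first.
  by exists 0 => x Ox; exfalso; apply: nO; exists x.
pose a : 'rV[R]_2 -> R := fun y => Rf y 0 0.
pose b : 'rV[R]_2 -> R := fun y => Rf y 1 0.
have Hso x : Omega x -> [/\ Rf x 1 1 = a x, Rf x 0 1 = - b x & a x ^+ 2 + b x ^+ 2 = 1].
  by move=> Ox; exact: so2_form (SO x Ox).
have nearO x : Omega x -> nbhs x Omega.
  by move=> Ox; move: oO; rewrite openE => /(_ x Ox).
have da x : Omega x -> differentiable a x by move=> Ox; exact: (C2 0 0).1 x Ox.
have db x : Omega x -> differentiable b x by move=> Ox; exact: (C2 1 0).1 x Ox.
pose p := alpha 0; pose q := alpha 1.
have FO x : Omega x ->
  [/\ partial 0 a x = p * (a x * b x) + q * (b x * b x),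
      partial 0 b x = - p * (a x * a x) + - q * (a x * b x),
      partial 1 a x = - p * (b x * b x) + q * (a x * b x) &
      partial 1 b x = p * (a x * b x) + - q * (a x * a x)].
  move=> Ox; have [_ _ N] := Hso x Ox.
  have c i : a x * partial i a x + b x * partial i b x = 0.
    have E : 'D_(ebase i) ((1 \*: (a * a)) + (1 \*: (b * b))) x = 0.
      rewrite (@near_eq_derive _ _ _ _ (cst (1:R)) x (ebase i)); first exact: derive_cst.
      apply: filterS (nearO x Ox) => y Oy; have [_ _ Ny] := Hso y Oy.
      by rewrite comb_eval /cst !mul1r -!expr2.
    rewrite (@d_comb R a a b b 1 1 x (ebase i) (da x Ox) (da x Ox) (db x Ox) (db x Ox)) in E.
    exact: alg0 E.
  have k0 : - partial 0 b x - partial 1 a x = p.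
    rewrite /p -(curl 0 x Ox) /curl_mx.
    have e1 : partial 0 (fun y => Rf y 0 1) x = 'D_(ebase 0) (- b) x.
      apply: near_eq_derive; apply: filterS (nearO x Ox) => y Oy.
      by have [_ -> _] := Hso y Oy.
    have dbx : derivable b x (ebase 0) := diff_derivable (db x Ox).
    by rewrite e1 (deriveN dbx).
  have k1 : partial 0 a x - partial 1 b x = q.
    rewrite /q -(curl 1 x Ox) /curl_mx.
    have e1 : partial 0 (fun y => Rf y 1 1) x = 'D_(ebase 0) a x.
      apply: near_eq_derive; apply: filterS (nearO x Ox) => y Oy.
      by have [-> _ _] := Hso y Oy.
    by rewrite e1.
  exact: alg1 N (c 0) (c 1) k0 k1.
case/nbhs_ballP: (nearO x0 Ox0) => r r0 Hr.
have DA z : ball x0 r z -> [/\ differentiable a z,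
     differentiable (partial 0 a) z & differentiable (partial 1 a) z].
  move=> /Hr Oz; split; [exact: da | exact: (C2 0 0).2.1 0 z Oz | exact: (C2 0 0).2.1 1 z Oz].
have DB z : ball x0 r z -> [/\ differentiable b z,
     differentiable (partial 0 b) z & differentiable (partial 1 b) z].
  move=> /Hr Oz; split; [exact: db | exact: (C2 1 0).2.1 0 z Oz | exact: (C2 1 0).2.1 1 z Oz].
have SA := @schwarz R a x0 r r0 DA ((C2 0 0).2.2 0 1 x0 Ox0) ((C2 0 0).2.2 1 0 x0 Ox0).
have SB := @schwarz R b x0 r r0 DB ((C2 1 0).2.2 0 1 x0 Ox0) ((C2 1 0).2.2 1 0 x0 Ox0).
have dax := da x0 Ox0; have dbx := db x0 Ox0.
have A10 : partial 1 (partial 0 a) x0 = 'D_(ebase 1) ((p \*: (a * b)) + (q \*: (b * b))) x0.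
  apply: near_eq_derive; apply: filterS (nearO x0 Ox0) => y Oy.
  by rewrite comb_eval; have [-> _ _ _] := FO y Oy.
have A01 : partial 0 (partial 1 a) x0 = 'D_(ebase 0) ((- p \*: (b * b)) + (q \*: (a * b))) x0.
  apply: near_eq_derive; apply: filterS (nearO x0 Ox0) => y Oy.
  by rewrite comb_eval; have [_ _ -> _] := FO y Oy.
have B10 : partial 1 (partial 0 b) x0 = 'D_(ebase 1) ((- p \*: (a * a)) + (- q \*: (a * b))) x0.
  apply: near_eq_derive; apply: filterS (nearO x0 Ox0) => y Oy.
  by rewrite comb_eval; have [_ -> _ _] := FO y Oy.
have B01 : partial 0 (partial 1 b) x0 = 'D_(ebase 0) ((p \*: (a * b)) + (- q \*: (a * a))) x0.
  apply: near_eq_derive; apply: filterS (nearO x0 Ox0) => y Oy.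
  by rewrite comb_eval; have [_ _ _ ->] := FO y Oy.
rewrite A10 A01 (@d_comb R a b b b p q x0 (ebase 1) dax dbx dbx dbx)
  (@d_comb R b b a b (- p) q x0 (ebase 0) dbx dbx dax dbx) in SA.
rewrite B10 B01 (@d_comb R a a a b (- p) (- q) x0 (ebase 1) dax dax dax dbx)
  (@d_comb R a b a a p (- q) x0 (ebase 0) dax dbx dax dax) in SB.
have [_ _ N0] := Hso x0 Ox0.
have [Fa0 Fb0 Fa1 Fb1] := FO x0 Ox0.
have [p0 q0] := @alg2 R _ _ _ _ _ _ _ _ N0 Fa0 Fb0 Fa1 Fb1 SA SB.
have Za y : Omega y -> [/\ differentiable a y, partial 0 a y = 0 & partial 1 a y = 0].
  move=> Oy; have [-> _ -> _] := FO y Oy; rewrite p0 q0 oppr0 !mul0r addr0.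
  by split => //; exact: da.
have Zb y : Omega y -> [/\ differentiable b y, partial 0 b y = 0 & partial 1 b y = 0].
  move=> Oy; have [_ -> _ ->] := FO y Oy; rewrite p0 q0 oppr0 !mul0r addr0.
  by split => //; exact: db.
have Ca := @const_connected R a Omega oO cO Za.
have Cb := @const_connected R b Omega oO cO Zb.
exists (Rf x0) => x Ox.
have [e11 e01 _] := Hso x Ox; have [f11 f01 _] := Hso x0 Ox0.
have ea : Rf x 0 0 = Rf x0 0 0 by exact: (Ca x0 x Ox0 Ox).
have eb : Rf x 1 0 = Rf x0 1 0 by exact: (Cb x0 x Ox0 Ox).
apply/matrixP => i j.
case: (I2cases i) => ->; case: (I2cases j) => ->.
- exact: ea.
- by rewrite e01 f01 /b eb.
- exact: eb.
- by rewrite e11 f11 /a ea.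
Qed.
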